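(* Let $\vec B=(b_0,\dots,b_{N-1})$ be a binary digit vector and let $\overleftarrow{B}$ be its reverse, $\overleftarrow{B}(n)=b_{N-1-n}$ for $n=0,\dots,N-1$. Then for all $x\in[0,1]$, $$F_{\overleftarrow{B}}(x)=1-F_{\vec B}(1-x).$$
   Context: A binary digit vector of length (scale factor) $N\ge3$ is $\vec B=(b_0,\dots,b_{N-1})\in\{0,1\}^N$ with $2\le\|\vec B\|:=\sum_i b_i\le N-1$; its digit set is $D=\{i:b_i=1\}$. With $\phi_d(x)=(x+d)/N$ for $d\in D$, let $\mu_{\vec B}$ be the unique Borel probability measure with $\mu_{\vec B}=\frac{1}{\|\vec B\|}\sum_{d\in D}\mu_{\vec B}\circ\phi_d^{-1}$, supported on the attractor $C_{\vec B}\subset[0,1]$. The CDF is $F_{\vec B}(x)=\mu_{\vec B}([0,x])$, $x\in[0,1]$. *)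

(* Defs.v *)
From HB Require Import structures.
From mathcomp Require Import all_boot all_order all_algebra.
From mathcomp Require Import all_classical all_reals all_analysis.
Set Implicit Arguments. Unset Strict Implicit. Unset Printing Implicit Defensive.
Import Order.TTheory GRing.Theory Num.Theory.
Local Open Scope classical_set_scope.
Local Open Scope ring_scope.

(* A binary digit vector of length N : b : 'I_N -> bool, b i = true iff b_i = 1.
   Digit set D = {i | b i}, ||B|| = #|D|. *)
Definition digit_count (N : nat) (b : 'I_N -> bool) : nat := #|[pred i | b i]|.

Definition is_digit_vector (N : nat) (b : 'I_N -> bool) : Prop :=
  (3 <= N)%N /\ (2 <= digit_count b)%N /\ (digit_count b <= N.-1)%N.

Definition rev_digits (N : nat) (b : 'I_N -> bool) : 'I_N -> bool :=
  fun i => b (rev_ord i).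

Definition phi_map (R : realType) (N : nat) (d : 'I_N) (x : R) : R :=
  (x + (d : nat)%:R) / N%:R.

Definition self_similar (R : realType) (N : nat) (b : 'I_N -> bool)
  (mu : probability R R) : Prop :=
  forall A : set R, measurable A ->
    mu A = (((digit_count b)%:R^-1 : R)%:E *
           \sum_(d < N | b d) mu (@phi_map R N d @^-1` A))%E.

Definition cdf_mu (R : realType) (mu : probability R R) (x : R) : R :=
  fine (mu `[0, x]%classic).

(* Main.v *)
Require Import Defs.
From mathcomp Require Import all_boot all_order all_algebra.
From mathcomp Require Import all_classical all_reals all_analysis.
From mathcomp Require Import lra ring.
Set Implicit Arguments. Unset Strict Implicit. Unset Printing Implicit Defensive.
Import Order.TTheory GRing.Theory Num.Theory.
Local Open Scope classical_set_scope.
Local Open Scope ring_scope.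


Definition G (R : realType) (mu : probability R R) (x : R) : R :=
  fine (mu `]-oo, x]%classic).

Lemma muE (R : realType) (mu : probability R R) (A : set R) :
  measurable A -> mu A = (fine (mu A))%:E.
Proof. by move=> mA; rewrite fineK// fin_num_measure. Qed.

Lemma G_ge0 (R : realType) (mu : probability R R) x : 0 <= G mu x.
Proof. by rewrite /G fine_ge0. Qed.

Lemma G_le1 (R : realType) (mu : probability R R) x : G mu x <= 1.
Proof.
rewrite /G -lee_fin -muE; last exact: measurable_itv.
exact: probability_le1 (measurable_itv _).
Qed.

Lemma G_mono (R : realType) (mu : probability R R) x y : x <= y -> G mu x <= G mu y.
Proof.
move=> xy; rewrite /G -lee_fin -!muE; try exact: measurable_itv.
apply: le_measure; rewrite ?inE; try exact: measurable_itv.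
by apply: subitvPr; rewrite bnd_simp.
Qed.

Lemma preim_phi (R : realType) (N : nat) (d : 'I_N) (x : R) : (0 < N)%N ->
  @phi_map R N d @^-1` `]-oo, x]%classic = `]-oo, N%:R * x - (d : nat)%:R]%classic.
Proof.
move=> N0; apply/seteqP; split => y /=; rewrite !in_itv /= /phi_map;
  rewrite ler_pdivrMr ?ltr0n // => h.
  by rewrite lerBrDr mulrC.
by rewrite -lerBrDr mulrC.
Qed.

Lemma G_eq (R : realType) (N : nat) (b : 'I_N -> bool) (mu : probability R R) :
  (0 < N)%N -> self_similar b mu -> forall x,
  G mu x = (digit_count b)%:R^-1 *
     \sum_(d < N | b d) G mu (N%:R * x - (d : nat)%:R).
Proof.
move=> N0 H x; rewrite {1}/G (H _ (measurable_itv _)).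
rewrite (eq_bigr (fun d : 'I_N => (G mu (N%:R * x - (d : nat)%:R))%:E)); last first.
  by move=> d _; rewrite preim_phi // -muE //; exact: measurable_itv.
by rewrite sumEFin -EFinM.
Qed.



Lemma sum_const_k (R : realType) (N : nat) (b : 'I_N -> bool) (c : R) :
  \sum_(d < N | b d) c = (digit_count b)%:R * c.
Proof. by rewrite sumr_const /digit_count mulr_natl. Qed.

Lemma G_le_N (R : realType) (N : nat) (b : 'I_N -> bool) (mu : probability R R) :
  (0 < N)%N -> (0 < digit_count b)%N -> self_similar b mu -> forall x,
  G mu x <= G mu (N%:R * x).
Proof.
move=> N0 k0 H x; rewrite (G_eq N0 H).
apply: (@le_trans _ _ ((digit_count b)%:R^-1 * \sum_(d < N | b d) G mu (N%:R * x))).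
  rewrite ler_wpM2l ?invr_ge0 ?ler0n //; apply: ler_sum => d _.
  by apply: G_mono; rewrite lerBlDr lerDl ler0n.
by rewrite sum_const_k mulrA mulVf ?mul1r // pnatr_eq0 -lt0n.
Qed.

Lemma G_ge_N (R : realType) (N : nat) (b : 'I_N -> bool) (mu : probability R R) :
  (0 < N)%N -> (0 < digit_count b)%N -> self_similar b mu -> forall t,
  G mu (1 + N%:R * t) <= G mu (1 + t).
Proof.
move=> N0 k0 H t; rewrite [X in _ <= X](G_eq N0 H).
apply: (@le_trans _ _ ((digit_count b)%:R^-1 * \sum_(d < N | b d) G mu (1 + N%:R * t))); last first.
  rewrite ler_wpM2l ?invr_ge0 ?ler0n //; apply: ler_sum => d _.
  apply: G_mono; have : ((d : nat).+1%:R <= N%:R :> R) by rewrite ler_nat.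
  rewrite -natr1 mulrDr mulr1; lra.
by rewrite sum_const_k mulrA mulVf ?mul1r // pnatr_eq0 -lt0n.
Qed.

Lemma G_neg (R : realType) (N : nat) (b : 'I_N -> bool) (mu : probability R R) :
  (1 < N)%N -> (0 < digit_count b)%N -> self_similar b mu -> forall x,
  x < 0 -> G mu x = 0.
Proof.
move=> N1 k0 H x x0.
have N0 : (0 < N)%N by apply: ltn_trans N1.
have Hn : forall n, G mu x <= G mu (N%:R ^+ n * x).
  elim=> [|n IH]; first by rewrite expr0 mul1r.
  apply: (le_trans IH); rewrite exprS -mulrA; exact: (G_le_N N0 k0 H).
pose F := fun n : nat => `]-oo, N%:R ^+ n * x]%classic.
have Fcap : \bigcap_n F n = set0.
  apply/seteqP; split => // s /= Hs.
  pose n := Num.truncn (`|s| / (- x)).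
  have := Hs n I; rewrite /F /= in_itv /= => hs.
  have h1 : (n.+1%:R : R) <= N%:R ^+ n by rewrite -natrX ler_nat; exact: ltn_expl.
  have h2 : `|s| / (-x) < n.+1%:R by exact: truncnS_gt.
  rewrite ltr_pdivrMr ?oppr_gt0 // in h2.
  have h3 : N%:R ^+ n * x <= n.+1%:R * x by rewrite ler_wnM2r // ltW.
  have h4 : -s <= `|s| by rewrite -normrN ler_norm.
  lra.
have cv := @nonincreasing_cvg_mu _ _ _ mu F.
have mF : forall i, measurable (F i) by move=> i; exact: measurable_itv.
rewrite Fcap measure0 in cv.
have {}cv := cv (le_lt_trans (probability_le1 _ (mF 0%N)) (ltry _)) mF
  measurable0.
have {}cv : (mu \o F) n @[n --> \oo] --> 0%E.
  apply: cv => m n mn; apply/subsetPset => s /=.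
  rewrite /F /= !in_itv /= => h.
  apply: (le_trans h); apply: ler_wnM2r; first exact: ltW.
  by rewrite -!natrX ler_nat leq_exp2l.
have : ((G mu x)%:E <= lim ((mu \o F) n @[n --> \oo]))%E.
  apply: lime_ge; first exact: (cvgP _ cv).
  apply: nearW => n /=; rewrite (muE mu (mF n)) lee_fin; exact: Hn.
rewrite (cvg_lim _ cv) // lee_fin => h.
by apply/le_anti; rewrite h G_ge0.
Qed.

Lemma G_big (R : realType) (N : nat) (b : 'I_N -> bool) (mu : probability R R) :
  (1 < N)%N -> (0 < digit_count b)%N -> self_similar b mu -> forall t,
  0 < t -> G mu (1 + t) = 1.
Proof.
move=> N1 k0 H t t0.
have N0 : (0 < N)%N by apply: ltn_trans N1.
have Hn : forall n, G mu (1 + N%:R ^+ n * t) <= G mu (1 + t).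
  elim=> [|n IH]; first by rewrite expr0 mul1r.
  apply: (le_trans _ IH); rewrite exprS -mulrA; exact: (G_ge_N N0 k0 H).
pose F := fun n : nat => `]-oo, 1 + N%:R ^+ n * t]%classic.
have Fcup : \bigcup_n F n = setT.
  apply/seteqP; split => // s _.
  pose n := Num.truncn (`|s| / t).
  exists n => //; rewrite /F /= in_itv /=.
  have h1 : (n.+1%:R : R) <= N%:R ^+ n by rewrite -natrX ler_nat; exact: ltn_expl.
  have h2 : `|s| / t < n.+1%:R by exact: truncnS_gt.
  rewrite ltr_pdivrMr // in h2.
  have h3 : n.+1%:R * t <= N%:R ^+ n * t by rewrite ler_wpM2r // ltW.
  have h4 : s <= `|s| by rewrite ler_norm.
  lra.
have mF : forall i, measurable (F i) by move=> i; exact: measurable_itv.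
have cv : (mu \o F) n @[n --> \oo] --> mu (\bigcup_n F n).
  apply: nondecreasing_cvg_mu => //; first by rewrite Fcup.
  move=> m n mn; apply/subsetPset => s /=.
  rewrite /F /= !in_itv /= => h.
  apply: (le_trans h); rewrite lerD2l; apply: ler_wpM2r; first exact: ltW.
  by rewrite -!natrX ler_nat leq_exp2l.
rewrite Fcup probability_setT in cv.
have : (lim ((mu \o F) n @[n --> \oo]) <= (G mu (1 + t))%:E)%E.
  apply: lime_le; first exact: (cvgP _ cv).
  apply: nearW => n /=; rewrite (muE mu (mF n)) lee_fin; exact: Hn.
rewrite (cvg_lim _ cv) // lee_fin => h.
by apply/le_anti; rewrite h G_le1.
Qed.

Lemma sum_le1 (R : realType) (N : nat) (P : pred 'I_N) (F : 'I_N -> R) (B : R) :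
  0 <= B -> (forall d, `|F d| <= B) ->
  (forall d d', P d -> P d' -> F d != 0 -> F d' != 0 -> d = d') ->
  `|\sum_(d < N | P d) F d| <= B.
Proof.
move=> B0 HB Hu.
case: (pickP [pred d | P d && (F d != 0)]) => [d0 /andP[Pd0 Fd0] | none].
  rewrite (bigD1 d0) //= big1 ?addr0 //.
  move=> d /andP[Pd dd0]; apply/eqP; apply/negPn/negP => Fd.
  by move/negP: dd0; apply; apply/eqP; exact: (Hu d d0 Pd Pd0 Fd Fd0).
rewrite big1 ?normr0 // => d Pd.
by have := none d; rewrite /= Pd /= => /negbFE/eqP.
Qed.

Lemma k_inv_le (R : realType) (k : nat) (y : R) : (2 <= k)%N -> 0 <= y ->
  y <= k%:R^-1 * y -> y = 0.
Proof.
move=> k2 y0 h; apply/le_anti; rewrite y0 andbT.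
have k0 : (0 : R) < k%:R by rewrite ltr0n; apply: leq_trans k2.
have : k%:R * y <= y.
  by have := ler_wpM2l (ltW k0) h; rewrite mulrA mulfV ?mul1r // lt0r_neq0.
have : (2 : R) <= k%:R by rewrite ler_nat.
nra.
Qed.

Lemma G_zero (R : realType) (N : nat) (b : 'I_N -> bool) (mu : probability R R) :
  (1 < N)%N -> (2 <= digit_count b)%N -> self_similar b mu -> G mu 0 = 0.
Proof.
move=> N1 k2 H.
have N0 : (0 < N)%N by apply: ltn_trans N1.
have k0 : (0 < digit_count b)%N by apply: leq_trans k2.
apply: (k_inv_le k2 (G_ge0 _ _)).
rewrite [X in X <= _](G_eq N0 H) ler_wpM2l ?invr_ge0 ?ler0n //.
apply: le_trans (ler_norm _) _.
apply: sum_le1 => [|d|d d' _ _]; first exact: G_ge0.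
  by rewrite ger0_norm ?G_ge0 //; apply: G_mono; rewrite mulr0 sub0r oppr_le0.
have E : forall e : 'I_N, G mu (N%:R * 0 - (e : nat)%:R) != 0 -> (e : nat) = 0%N.
  move=> e; case: (posnP e) => // e0; rewrite (G_neg N1 k0 H) ?eqxx //.
  by rewrite mulr0 sub0r oppr_lt0 ltr0n.
by move=> /E h /E h'; apply: val_inj; rewrite /= h h'.
Qed.

Lemma G_one (R : realType) (N : nat) (b : 'I_N -> bool) (mu : probability R R) :
  (1 < N)%N -> (2 <= digit_count b)%N -> self_similar b mu -> G mu 1 = 1.
Proof.
move=> N1 k2 H.
have N0 : (0 < N)%N by apply: ltn_trans N1.
have k0 : (0 < digit_count b)%N by apply: leq_trans k2.
have kn0 : (digit_count b)%:R != 0 :> R by rewrite pnatr_eq0 -lt0n.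
suff : 1 - G mu 1 = 0 by move/eqP; rewrite subr_eq0 => /eqP.
apply: (k_inv_le k2); first by rewrite subr_ge0 G_le1.
have E1 : 1 - G mu 1 = (digit_count b)%:R^-1 *
    \sum_(d < N | b d) (1 - G mu (N%:R * 1 - (d : nat)%:R)).
  by rewrite sumrB sum_const_k mulrBr -G_eq // mulrA mulVf // mulr1.
rewrite {1}E1.
rewrite ler_wpM2l ?invr_ge0 ?ler0n //.
apply: le_trans (ler_norm _) _.
apply: sum_le1 => [|d|d d' _ _]; first by rewrite subr_ge0 G_le1.
  rewrite ger0_norm ?subr_ge0 ?G_le1 // lerD2l lerN2; apply: G_mono.
  have : ((d : nat).+1%:R <= N%:R :> R) by rewrite ler_nat.
  rewrite -natr1; lra.
have E : forall e : 'I_N, 1 - G mu (N%:R * 1 - (e : nat)%:R) != 0 -> (e : nat) = N.-1.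
  move=> e; have := ltn_ord e; rewrite leq_eqVlt => /orP[eN|eN].
    by move=> _; apply/eqP; rewrite -eqSS prednK.
  have -> : N%:R * 1 - (e : nat)%:R = 1 + (N%:R - (e : nat).+1%:R) :> R.
    by rewrite -natr1 mulr1; lra.
  rewrite (G_big N1 k0 H) ?subrr ?eqxx // subr_gt0 ltr_nat.
  by [].
by move=> /E h /E h'; apply: val_inj; rewrite /= h h'.
Qed.



Lemma dc_rev (N : nat) (b : 'I_N -> bool) :
  digit_count (rev_digits b) = digit_count b.
Proof.
rewrite /digit_count /rev_digits -!sum1_card.
rewrite [in RHS](reindex_inj rev_ord_inj) /=.
by apply: eq_bigl => i.
Qed.

Lemma G_low (R : realType) (N : nat) (b : 'I_N -> bool) (mu : probability R R) :
  (1 < N)%N -> (2 <= digit_count b)%N -> self_similar b mu -> forall y,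
  y <= 0 -> G mu y = 0.
Proof.
move=> N1 k2 H y; rewrite le_eqVlt => /orP[/eqP ->|y0].
  exact: (G_zero N1 k2 H).
by apply: (G_neg N1 _ H) => //; apply: leq_trans k2.
Qed.

Lemma G_high (R : realType) (N : nat) (b : 'I_N -> bool) (mu : probability R R) :
  (1 < N)%N -> (2 <= digit_count b)%N -> self_similar b mu -> forall y,
  1 <= y -> G mu y = 1.
Proof.
move=> N1 k2 H y; rewrite le_eqVlt => /orP[/eqP <-|y0].
  exact: (G_one N1 k2 H).
have -> : y = 1 + (y - 1) by rewrite addrC subrK.
by apply: (G_big N1 _ H); [apply: leq_trans k2 | rewrite subr_gt0].
Qed.

Lemma cdf_G (R : realType) (mu : probability R R) x :
  0 <= x -> G mu 0 = 0 -> cdf_mu mu x = G mu x.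
Proof.
move=> x0 G0; rewrite /cdf_mu /G.
have E : `]-oo, x]%classic = `]-oo, 0[%classic `|` `[0, x]%classic.
  apply/seteqP; split => y /=; rewrite !in_itv /=.
    move=> yx; case: (ltP y 0) => y0; [by left | by right; apply/andP; split].
  by case => [y0|/andP[_ ->]] //; apply: le_trans x0; exact: ltW.
have Z : mu `]-oo, 0[%classic = 0%E.
  apply/le_anti; rewrite measure_ge0 andbT.
  have : mu `]-oo, 0]%classic = 0%E.
    by rewrite (@muE R mu _ (measurable_itv `]-oo, 0])); rewrite /G in G0; rewrite G0.
  move=> <-; apply: le_measure; rewrite ?inE; try exact: measurable_itv.
  by apply: subitvPr; rewrite bnd_simp.
rewrite E measureU; try exact: measurable_itv.
  have Z2 : (mu : {content set R -> \bar R}) (`]-oo, 0[%classic : set R) = 0%E := Z.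
  by rewrite Z2 add0e.
apply/seteqP; split => y //=; rewrite !in_itv /= => -[h1 /andP[h2 _]].
by move: (lt_le_trans h1 h2); rewrite ltxx.
Qed.

Definition Dl (R : realType) (mu nu : probability R R) (x : R) : R :=
  G nu x + G mu (1 - x) - 1.

Lemma D_eq (R : realType) (N : nat) (b : 'I_N -> bool) (mu nu : probability R R) :
  (0 < N)%N -> (0 < digit_count b)%N -> self_similar b mu ->
  self_similar (rev_digits b) nu -> forall x,
  Dl mu nu x = (digit_count b)%:R^-1 *
     \sum_(d < N | rev_digits b d) Dl mu nu (N%:R * x - (d : nat)%:R).
Proof.
move=> N0 k0 Hmu Hnu x.
have kn0 : (digit_count b)%:R != 0 :> R by rewrite pnatr_eq0 -lt0n.
have Hn := G_eq N0 Hnu x; rewrite dc_rev in Hn.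
have Hm := G_eq N0 Hmu (1 - x).
rewrite (reindex_inj rev_ord_inj) /= in Hm.
have Hm' : G mu (1 - x) = (digit_count b)%:R^-1 *
    \sum_(d < N | rev_digits b d) G mu (1 - (N%:R * x - (d : nat)%:R)).
  rewrite Hm; congr (_ * _); apply: eq_bigr => j _; congr (G mu _).
  rewrite /= natrB ?ltn_ord // -natr1; ring.
rewrite /Dl Hn Hm' sumrB big_split /= sum_const_k.
by rewrite dc_rev mulrBr mulrDr mulr1 mulVf.
Qed.

Lemma D_out (R : realType) (N : nat) (b : 'I_N -> bool) (mu nu : probability R R) :
  (1 < N)%N -> (2 <= digit_count b)%N -> self_similar b mu ->
  self_similar (rev_digits b) nu -> forall y,
  (y <= 0) || (1 <= y) -> Dl mu nu y = 0.
Proof.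
move=> N1 k2 Hmu Hnu y; rewrite /Dl.
have k2' : (2 <= digit_count (rev_digits b))%N by rewrite dc_rev.
case/orP => hy.
  rewrite (G_low N1 k2' Hnu hy) (G_high N1 k2 Hmu); first by rewrite add0r subrr.
  lra.
rewrite (G_high N1 k2' Hnu hy) (G_low N1 k2 Hmu); first by rewrite addr0 subrr.
lra.
Qed.

Lemma D_bound (R : realType) (N : nat) (b : 'I_N -> bool) (mu nu : probability R R) :
  (1 < N)%N -> (2 <= digit_count b)%N -> self_similar b mu ->
  self_similar (rev_digits b) nu -> forall n y,
  `|Dl mu nu y| <= (n.+1%:R)^-1.
Proof.
move=> N1 k2 Hmu Hnu.
have N0 : (0 < N)%N by apply: ltn_trans N1.
have k0 : (0 < digit_count b)%N by apply: leq_trans k2.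
elim=> [|n IH] y.
  rewrite invr1 ler_norml /Dl.
  have := G_ge0 nu y; have := G_le1 nu y.
  have := G_ge0 mu (1 - y); have := G_le1 mu (1 - y).
  lra.
rewrite (D_eq N0 k0 Hmu Hnu) normrM ger0_norm ?invr_ge0 ?ler0n //.
apply: (@le_trans _ _ ((digit_count b)%:R^-1 * (n.+1%:R)^-1)).
  rewrite ler_wpM2l ?invr_ge0 ?ler0n //.
  apply: sum_le1 => [|d|d d' _ _]; first by rewrite invr_ge0 ler0n.
    exact: IH.
  have in01 : forall e : 'I_N, Dl mu nu (N%:R * y - (e : nat)%:R) != 0 ->
      0 < N%:R * y - (e : nat)%:R < 1.
    move=> e hne.
    case: (leP (N%:R * y - (e : nat)%:R) 0) => h1.
      by move: hne; rewrite (D_out N1 k2 Hmu Hnu) ?h1 ?eqxx.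
    case: (leP 1 (N%:R * y - (e : nat)%:R)) => h2.
      by move: hne; rewrite (D_out N1 k2 Hmu Hnu) ?h2 ?orbT ?eqxx.
    by apply/andP; split.
  move=> /in01 /andP[a1 a2] /in01 /andP[a3 a4].
  apply: val_inj; case: (ltngtP d d') => // hdd.
    have : ((d : nat)%:R + 1 <= (d' : nat)%:R :> R) by rewrite natr1 ler_nat.
    move=> ?; exfalso; lra.
  have : ((d' : nat)%:R + 1 <= (d : nat)%:R :> R) by rewrite natr1 ler_nat.
  move=> ?; exfalso; lra.
rewrite -invfM lef_pV2 ?posrE ?mulr_gt0 ?ltr0n //.
have : (2 : R) <= (digit_count b)%:R by rewrite ler_nat.
have : (0 : R) <= n%:R by rewrite ler0n.
rewrite -!natr1; nra.
Qed.

Lemma D_zero (R : realType) (N : nat) (b : 'I_N -> bool) (mu nu : probability R R) :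
  (1 < N)%N -> (2 <= digit_count b)%N -> self_similar b mu ->
  self_similar (rev_digits b) nu -> forall y, Dl mu nu y = 0.
Proof.
move=> N1 k2 Hmu Hnu y; apply/eqP; apply/negPn/negP => hne.
have p : 0 < `|Dl mu nu y| by rewrite normr_gt0.
pose n := Num.truncn (`|Dl mu nu y|^-1).
have h := truncnS_gt (`|Dl mu nu y|^-1).
rewrite invf_plt ?posrE ?ltr0n // in h.
by have := D_bound N1 k2 Hmu Hnu n y; rewrite leNgt h.
Qed.

Theorem proposition2p5 (R : realType) (N : nat) (b : 'I_N -> bool)
  (mu : probability R R) (nu : probability R R) :
  is_digit_vector b ->
  self_similar b mu ->
  self_similar (rev_digits b) nu ->
  forall x : R, 0 <= x <= 1 -> cdf_mu nu x = 1 - cdf_mu mu (1 - x).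
Proof.
move=> [N3 [k2 _]] Hmu Hnu x /andP[x0 x1].
have N1 : (1 < N)%N by apply: leq_trans N3.
have k2' : (2 <= digit_count (rev_digits b))%N by rewrite dc_rev.
rewrite (cdf_G x0 (G_zero N1 k2' Hnu)).
rewrite (cdf_G _ (G_zero N1 k2 Hmu)); last by rewrite subr_ge0.
have := D_zero N1 k2 Hmu Hnu x; rewrite /Dl; lra.
Qed.
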